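(* Let $R$ be a ring. The following are equivalent: (1) $R$ is semisimple Artinian; (2) for every right $R$-module $E$ and any two submodules $A,B\subseteq E$ that are injective, the submodule $A\cap B$ is injective; (3) for every right $R$-module $E$ and any two submodules $A,B\subseteq E$ that are $\aleph_0$-injective, the submodule $A\cap B$ is $\aleph_0$-injective.
   Context: Rings are associative with identity; modules are unitary right modules. A right $R$-module $M$ is $\aleph_0$-injective if for every countably generated right ideal $I$ of $R$ and every $R$-homomorphism $f:I\to M$ there is an $R$-homomorphism $\bar f:R\to M$ with $\bar f|_I=f$. *)

(* Defs.v *)
(* Right R-modules are modelled as left modules over the
   converse ring R^c (MathComp's lmodType over R^c); the right action
   v . r is written  v *r r  :=  (r : R^c) *: v. *)
From HB Require Import structures.
From mathcomp Require Import all_boot all_order all_algebra.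
Set Implicit Arguments. Unset Strict Implicit. Unset Printing Implicit Defensive.
Import GRing.Theory.
Local Open Scope ring_scope.

Definition ract (R : pzRingType) (E : lmodType R^c) (v : E) (r : R) : E :=
  (r : R^c) *: v.
Notation "v *r r" := (ract v r) (at level 40, left associativity).

Section Defs.
Variable R : pzRingType.

Definition is_hom (X Y : lmodType R^c) (f : X -> Y) : Prop :=
  (forall x y, f (x + y) = f x + f y) /\ (forall x (r : R), f (x *r r) = f x *r r).

Definition is_submodule (E : lmodType R^c) (A : E -> Prop) : Prop :=
  [/\ A 0, (forall x y, A x -> A y -> A (x + y)) & (forall x (r : R), A x -> A (x *r r))].

Definition right_ideal (I : R -> Prop) : Prop :=
  [/\ I 0, (forall x y, I x -> I y -> I (x + y)) & (forall x r, I x -> I (x * r))].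

Definition countably_generated (I : R -> Prop) : Prop :=
  exists g : nat -> R, forall x,
    I x <-> exists (n : nat) (rs : nat -> R), x = \sum_(i < n) g i * rs i.

(** Homomorphisms into A are
    represented as homomorphisms into E with image contained in A. *)
Definition injective_sub (E : lmodType R^c) (A : E -> Prop) : Prop :=
  forall (X Y : lmodType R^c) (i : X -> Y) (f : X -> E),
    is_hom i -> injective i -> is_hom f -> (forall x, A (f x)) ->
    exists g : Y -> E, [/\ is_hom g, (forall y, A (g y)) & (forall x, g (i x) = f x)].

Definition aleph0_injective_sub (E : lmodType R^c) (A : E -> Prop) : Prop :=
  forall (I : R -> Prop) (f : R -> E),
    right_ideal I -> countably_generated I ->
    (forall x y, I x -> I y -> f (x + y) = f x + f y) ->
    (forall x r, I x -> f (x * r) = f x *r r) ->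
    (forall x, I x -> A (f x)) ->
    exists g : R -> E,
      [/\ (forall x y, g (x + y) = g x + g y),
          (forall x r, g (x * r) = g x *r r),
          (forall x, A (g x)) &
          (forall x, I x -> g x = f x)].

Definition right_artinian : Prop :=
  forall I : nat -> R -> Prop,
    (forall n, right_ideal (I n)) ->
    (forall n x, I n.+1 x -> I n x) ->
    exists N, forall m, (N <= m)%N -> forall x, I m x <-> I N x.

Definition every_right_ideal_summand : Prop :=
  forall I, right_ideal I ->
    exists J, [/\ right_ideal J,
                  (forall x, I x -> J x -> x = 0) &
                  (forall x, exists a b, [/\ I a, J b & x = a + b])].

Definition semisimple_artinian : Prop :=
  right_artinian /\ every_right_ideal_summand.

End Defs.

(* Main.v *)
Require Import Defs.
From HB Require Import structures.
From mathcomp Require Import all_boot all_order all_algebra.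
From Stdlib Require Import ClassicalEpsilon FunctionalExtensionality PropExtensionality Classical ProofIrrelevance.
Set Implicit Arguments. Unset Strict Implicit. Unset Printing Implicit Defensive.
Import Order.TTheory GRing.Theory Num.Theory.
Local Open Scope ring_scope.

Lemma pset_ext (T : Type) (A B : T -> Prop) : (forall x, A x <-> B x) -> A = B.
Proof.
move=> H; apply: functional_extensionality => x; apply: propositional_extensionality; exact: H.
Qed.

Section Zorn.
Variables (T : Type) (le : T -> T -> Prop).
Hypothesis le_refl : forall x, le x x.
Hypothesis le_trans : forall x y z, le x y -> le y z -> le x z.

Definition chainT (C : T -> Prop) := forall x y, C x -> C y -> le x y \/ le y x.
Hypothesis chain_ub : forall C : T -> Prop, chainT C -> exists u, forall x, C x -> le x u.

Definition psub (A B : T -> Prop) := forall x, A x -> B x.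

Definition ext_ok (C : T -> Prop) (x : T) := ~ C x /\ chainT (fun y => C y \/ y = x).

Definition gnext (C : T -> Prop) : T -> Prop :=
  match excluded_middle_informative (exists x, ext_ok C x) with
  | left H => let x := proj1_sig (constructive_indefinite_description _ H) in
              fun y => C y \/ y = x
  | right _ => C
  end.

Lemma gnext_sub C : psub C (gnext C).
Proof. rewrite /gnext; case: excluded_middle_informative => [H|H] x Cx //; by left. Qed.

Inductive tower : (T -> Prop) -> Prop :=
| tw_next : forall C, tower C -> tower (gnext C)
| tw_sup : forall K : (T -> Prop) -> Prop, (forall C, K C -> tower C) ->
    tower (fun x => exists C, K C /\ C x).

Definition normal (Y : T -> Prop) :=
  forall X, tower X -> psub X Y -> X = Y \/ psub (gnext X) Y.

Lemma antis (X Y : T -> Prop) : psub X Y -> psub Y X -> X = Y.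
Proof. move=> h1 h2; apply: pset_ext => x; split; [exact: h1|exact: h2]. Qed.

Lemma L2 Y : normal Y -> forall X, tower X -> psub X Y \/ psub (gnext Y) X.
Proof.
move=> nY X; elim=> {X}.
- move=> X tX [h|h].
  + case: (nY X tX h) => [->|h2]; [right=> x //|by left].
  + right=> x /h; exact: gnext_sub.
- move=> K tK IH.
  case: (classic (exists C, K C /\ psub (gnext Y) C)) => [[C [KC hC]]|hn].
  + right=> x /hC Cx; by exists C.
  + left=> x [C [KC Cx]]; case: (IH C KC) => [h|h]; first exact: h.
    by exfalso; apply: hn; exists C.
Qed.

Lemma L3 Y : tower Y -> normal Y.
Proof.
elim=> {Y}.
- move=> Y tY nY X tX hX.
  case: (L2 nY tX) => [h|h].
  + case: (nY X tX h) => [->|h2]; first by right.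
    right=> x /h2; exact: gnext_sub.
  + by left; apply: antis.
- move=> K tK IH X tX hX.
  case: (classic (exists Z, K Z /\ psub X Z)) => [[Z [KZ hZ]]|hn].
  + case: (IH Z KZ X tX hZ) => [eXZ|h].
    * subst X.
      case: (L2 (IH Z KZ) (tw_sup tK)) => [h|h].
      - left; apply: antis => // x Zx; by exists Z.
      - by right.
    * right=> x /h Zx; by exists Z.
  + left; apply: antis => // x [Z [KZ Zx]].
    case: (L2 (IH Z KZ) tX) => [h|h]; first by exfalso; apply: hn; exists Z.
    by apply: h; apply: gnext_sub.
Qed.

Lemma tower_total X Y : tower X -> tower Y -> psub X Y \/ psub Y X.
Proof.
move=> tX tY; case: (L2 (L3 tY) tX) => [h|h]; [by left|right=> x Yx].
by apply: h; apply: gnext_sub.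
Qed.

Lemma tower_chain C : tower C -> chainT C.
Proof.
elim=> {C}.
- move=> C tC cC; rewrite /gnext; case: excluded_middle_informative => // H.
  by case: (proj2_sig (constructive_indefinite_description _ H)).
- move=> K tK IH x y [C1 [K1 x1]] [C2 [K2 y2]].
  case: (tower_total (tK _ K1) (tK _ K2)) => h.
  + by apply: (IH C2 K2) => //; apply: h.
  + by apply: (IH C1 K1) => //; apply: h.
Qed.

Lemma zorn_pre : exists m, forall x, le m x -> le x m.
Proof.
pose U := fun x => exists C, tower C /\ C x.
have tU : tower U by apply: tw_sup.
have cU : chainT U by apply: tower_chain.
have noext : forall x, ~ ext_ok U x.
  move=> x hx.
  have tg : tower (gnext U) by apply: tw_next.
  move: (erefl (gnext U)); rewrite {2}/gnext.
  case: excluded_middle_informative => [H|H]; last by move=> _; apply: H; exists x.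
  move=> eg.
  case: (proj2_sig (constructive_indefinite_description _ H)) => nU _.
  apply: nU; exists (gnext U); split => //; rewrite eg; by right.
case: (chain_ub cU) => u hu; exists u => x hux.
case: (classic (U x)) => [Ux|nUx]; first exact: hu.
exfalso; apply: (noext x); split => //.
move=> a b [Ua|->] [Ub|->].
- exact: cU.
- by left; apply: le_trans (hu _ Ua) hux.
- by right; apply: le_trans (hu _ Ub) hux.
- by left.
Qed.
End Zorn.

Section Baer.
Variables (K : pzRingType) (Y E : lmodType K) (D : E -> Prop).
Hypothesis Dadd : forall a b, D a -> D b -> D (a + b).

Definition lideal (I : K -> Prop) :=
  [/\ I 0, (forall x y, I x -> I y -> I (x + y)) & (forall k x, I x -> I (k * x))].
Definition submodP (V : lmodType K) (P : V -> Prop) :=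
  [/\ P 0, (forall x y, P x -> P y -> P (x + y)) & (forall k x, P x -> P (k *: x))].
Definition linon (V W : lmodType K) (P : V -> Prop) (f : V -> W) :=
  (forall x y, P x -> P y -> f (x + y) = f x + f y) /\
  (forall k x, P x -> f (k *: x) = k *: f x).

Hypothesis baerD : forall I, lideal I -> forall h : K -> E,
  (forall x y, I x -> I y -> h (x + y) = h x + h y) ->
  (forall k x, I x -> h (k * x) = k *: h x) ->
  (forall x, I x -> D (h x)) ->
  exists h' : K -> E, [/\ (forall x y, h' (x + y) = h' x + h' y),
     (forall k x, h' (k * x) = k *: h' x), (forall x, D (h' x)) &
     (forall x, I x -> h' x = h x)].

Lemma add_fix0 (V : zmodType) (a : V) : a = a + a -> a = 0.
Proof. by move/(congr1 (fun z => z - a)); rewrite subrr addrK => ->. Qed.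

Lemma rearr (V : zmodType) (q k q0 k0 : V) : q + k = q0 + k0 -> k0 - k = q - q0.
Proof.
move=> e; have -> : k0 = (q0 + k0) - q0 by rewrite addrC addKr.
by rewrite -e addrAC addrK.
Qed.

Record pm := PM { dom : Y -> Prop; fn : Y -> E }.

Variables (P : Y -> Prop) (f : Y -> E).
Hypotheses (sP : submodP P) (lf : linon P f) (Df : forall x, P x -> D (f x)).

Definition good (p : pm) :=
  [/\ submodP (dom p), (forall x, P x -> dom p x), linon (dom p) (fn p),
      (forall x, dom p x -> D (fn p x)) & (forall x, P x -> fn p x = f x)].

Definition PT := {p : pm | good p}.
Definition ple (a b : PT) :=
  (forall x, dom (proj1_sig a) x -> dom (proj1_sig b) x) /\
  (forall x, dom (proj1_sig a) x -> fn (proj1_sig b) x = fn (proj1_sig a) x).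

Lemma ple_refl a : ple a a. Proof. by split. Qed.
Lemma ple_trans a b c : ple a b -> ple b c -> ple a c.
Proof.
move=> [h1 h2] [h3 h4]; split=> x dx; first by apply: h3; apply: h1.
by rewrite h4 ?h2 //; apply: h1.
Qed.

Lemma good_base : good (PM P f).
Proof. by split. Qed.
Definition base : PT := exist _ _ good_base.

Lemma base_le a : ple base a.
Proof. case: a => [[Q g] [s1 s2 s3 s4 s5]]; split=> x /= px; first exact: s2. exact: s5. Qed.

Lemma submod0 (V : lmodType K) (Q : V -> Prop) : submodP Q -> Q 0.
Proof. by case. Qed.
Lemma submodD (V : lmodType K) (Q : V -> Prop) x y : submodP Q -> Q x -> Q y -> Q (x + y).
Proof. by case=> _ h _; apply: h. Qed.
Lemma submodZ (V : lmodType K) (Q : V -> Prop) k x : submodP Q -> Q x -> Q (k *: x).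
Proof. by case=> _ _ h; apply: h. Qed.
Lemma submodN (V : lmodType K) (Q : V -> Prop) x : submodP Q -> Q x -> Q (- x).
Proof. by move=> s qx; rewrite -scaleN1r; apply: submodZ. Qed.
Lemma submodB (V : lmodType K) (Q : V -> Prop) x y : submodP Q -> Q x -> Q y -> Q (x - y).
Proof. by move=> s qx qy; apply: submodD => //; apply: submodN. Qed.

Lemma chain_ub_T (C : PT -> Prop) : chainT ple C -> exists u, forall x, C x -> ple x u.
Proof.
move=> cC.
pose C' := fun a => C a \/ a = base.
have cC' : chainT ple C'.
  move=> a b [Ca|->] [Cb|->]; [exact: cC| by right; apply: base_le|by left; apply: base_le|by left].
have Cb : C' base by right.
have common : forall a b, C' a -> C' b -> exists c, [/\ C' c, ple a c & ple b c].
  move=> a b Ca Cb'; case: (cC' a b Ca Cb') => h.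
  - by exists b; split => //; apply: ple_refl.
  - by exists a; split => //; apply: ple_refl.
pose Qu := fun y => exists a, C' a /\ dom (proj1_sig a) y.
pose gu := fun y => match excluded_middle_informative (exists a, C' a /\ dom (proj1_sig a) y) with
  | left H => fn (proj1_sig (proj1_sig (constructive_indefinite_description _ H))) y
  | right _ => 0 end.
have gu_spec : forall a y, C' a -> dom (proj1_sig a) y -> gu y = fn (proj1_sig a) y.
  move=> a y Ca da; rewrite /gu; case: excluded_middle_informative => [H|H]; last first.
    by exfalso; apply: H; exists a.
  case: (proj2_sig (constructive_indefinite_description _ H)) => Ca0 da0.
  set a0 := proj1_sig _ in Ca0 da0 *.
  case: (cC' a a0 Ca Ca0) => [[_ h]|[_ h]]; first by rewrite h.
  by rewrite h.
have gdom : forall a y, C' a -> dom (proj1_sig a) y -> Qu y.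
  by move=> a y Ca da; exists a.
have gd : good (PM Qu gu).
  split => /=.
  - split.
    + by exists base; split => //=; case: sP.
    + move=> x y [a [Ca dx]] [b [Cb' dy]].
      case: (common a b Ca Cb') => c [Cc [ac _] [bc _]].
      exists c; split => //; case: (proj2_sig c) => sc _ _ _ _.
      by apply: submodD => //; [apply: ac | apply: bc].
    + move=> k x [a [Ca dx]]; exists a; split => //.
      by case: (proj2_sig a) => sa _ _ _ _; apply: submodZ.
  - by move=> x px; exists base.
  - split.
    + move=> x y [a [Ca dx]] [b [Cb' dy]].
      case: (common a b Ca Cb') => c [Cc [ac _] [bc _]].
      case: (proj2_sig c) => sc _ [lc1 lc2] _ _.
      have dxc := ac _ dx; have dyc := bc _ dy.
      rewrite (gu_spec c x) // (gu_spec c y) // (gu_spec c (x + y)) //; first exact: lc1.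
      exact: submodD.
    + move=> k x [a [Ca dx]].
      case: (proj2_sig a) => sa _ [la1 la2] _ _.
      rewrite (gu_spec a x) // (gu_spec a (k *: x)) //; first exact: la2.
      exact: submodZ.
  - move=> x [a [Ca dx]]; rewrite (gu_spec a x) //.
    by case: (proj2_sig a) => _ _ _ h _; apply: h.
  - by move=> x px; rewrite (gu_spec base x).
exists (exist _ _ gd) => a Ca; split => /= x dx; first by exists a; split => //; left.
by rewrite (gu_spec a x) //; left.
Qed.

Lemma baer : exists g : Y -> E, [/\ (forall x y, g (x + y) = g x + g y),
    (forall k x, g (k *: x) = k *: g x), (forall x, D (g x)) &
    (forall x, P x -> g x = f x)].
Proof.
case: (zorn_pre ple_refl ple_trans chain_ub_T) => m mmax.
case: m mmax => [[Q g] gm] mmax.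
case: (gm) => sQ PQ [lg1 lg2] Dg gP.
simpl in sQ, PQ, lg1, lg2, Dg, gP.
suff allQ : forall y, Q y.
  exists g; split => //.
  - by move=> x y; apply: lg1.
  - by move=> k x; apply: lg2.
  - by move=> x; apply: Dg.
move=> y; apply: NNPP => nQy.
pose I := fun k : K => Q (k *: y).
have lI : lideal I.
  split; rewrite /I.
  - by rewrite scale0r; case: sQ.
  - by move=> a b ha hb; rewrite scalerDl; apply: submodD.
  - by move=> k a ha; rewrite -scalerA; apply: submodZ.
pose h := fun k : K => g (k *: y).
have [h' [h'D h'Z h'Dv h'I]] : exists h' : K -> E, [/\ (forall x y, h' (x + y) = h' x + h' y),
     (forall k x, h' (k * x) = k *: h' x), (forall x, D (h' x)) &
     (forall x, I x -> h' x = h x)].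
  apply: baerD => //.
  - by move=> a b ha hb; rewrite /h scalerDl lg1.
  - by move=> k a ha; rewrite /h -scalerA lg2.
  - by move=> a ha; apply: Dg.
have h'0 : h' 0 = 0.
  by apply: add_fix0; rewrite -h'D addr0.
have g0 : g 0 = 0.
  have q0 : Q 0 by case: sQ.
  by apply: add_fix0; rewrite -lg1 // addr0.
pose Q' := fun z => exists p : Y * K, Q p.1 /\ z = p.1 + p.2 *: y.
pose g' := fun z => match excluded_middle_informative (Q' z) with
  | left H => let p := proj1_sig (constructive_indefinite_description _ H) in g p.1 + h' p.2
  | right _ => 0 end.
have g'_spec : forall q k, Q q -> g' (q + k *: y) = g q + h' k.
  move=> q k Qq; rewrite /g'; case: excluded_middle_informative => [H|H]; last first.
    by exfalso; apply: H; exists (q, k).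
  case: (proj2_sig (constructive_indefinite_description _ H)).
  set p := proj1_sig _; case: p => q0 k0 /= Qq0 e.
  have Ik : I (k0 - k).
    rewrite /I scalerBl; have -> : k0 *: y - k *: y = q - q0.
      exact: rearr.
    exact: submodB.
  have e1 : h' k0 = h' (k0 - k) + h' k by rewrite -h'D subrK.
  rewrite e1 (h'I _ Ik) /h.
  have -> : (k0 - k) *: y = q - q0.
    by rewrite scalerBl; apply: rearr.
  have Qd : Q (q - q0) by apply: submodB.
  by rewrite addrA -lg1 // (addrC q0 (q - q0)) subrK.
have Q'Q : forall q, Q q -> Q' q by move=> q Qq; exists (q, 0); rewrite /= scale0r addr0.
have g'Q : forall q, Q q -> g' q = g q.
  by move=> q Qq; rewrite -{1}(addr0 q) -(scale0r y) g'_spec // h'0 addr0.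
have gd' : good (PM Q' g').
  split => /=.
  - split.
    + by apply: Q'Q; case: sQ.
    + move=> a b [[q1 k1] [/= Q1 ->]] [[q2 k2] [/= Q2 ->]].
      exists (q1 + q2, k1 + k2); split => /=; first exact: submodD.
      by rewrite scalerDl addrACA.
    + move=> k a [[q1 k1] [/= Q1 ->]]; exists (k *: q1, k * k1); split => /=.
        exact: submodZ.
      by rewrite scalerDr scalerA.
  - by move=> x px; apply: Q'Q; apply: PQ.
  - split.
    + move=> a b [[q1 k1] [/= Q1 ->]] [[q2 k2] [/= Q2 ->]].
      rewrite addrACA -scalerDl !g'_spec //; last exact: submodD.
      by rewrite lg1 // h'D addrACA.
    + move=> k a [[q1 k1] [/= Q1 ->]].
      rewrite scalerDr scalerA !g'_spec //; last exact: submodZ.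
      by rewrite lg2 // h'Z scalerDr.
  - by move=> a [[q1 k1] [/= Q1 ->]]; rewrite g'_spec //; apply: Dadd => //; apply: Dg.
  - by move=> x px; rewrite g'Q ?gP //; apply: PQ.
have lem : ple (exist _ _ gm) (exist _ _ gd').
  by split => /= x dx; [apply: Q'Q | apply: g'Q].
case: (mmax _ lem) => /= h1 _.
apply: nQy; apply: h1; exists (0, 1); split; first by case: sQ.
by rewrite /= scale1r add0r.
Qed.
End Baer.

Definition peqb (T : Type) (x y : T) : bool :=
  if excluded_middle_informative (x = y) then true else false.
Lemma peqP (T : Type) : Equality.axiom (@peqb T).
Proof. move=> x y; rewrite /peqb; case: excluded_middle_informative => h; by constructor. Qed.

Definition pfind (T : Type) (P : pred T) (n : nat) : option T :=
  match excluded_middle_informative (exists x, P x) with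
  | left H => Some (proj1_sig (constructive_indefinite_description _ H))
  | right _ => None end.
Lemma pfind_correct (T : Type) (P : pred T) n x : pfind P n = Some x -> P x.
Proof.
rewrite /pfind; case: excluded_middle_informative => // H [<-].
exact: (proj2_sig (constructive_indefinite_description _ H)).
Qed.
Lemma pfind_complete (T : Type) (P : pred T) : (exists x, P x) -> exists n, pfind P n.
Proof. by move=> H; exists 0%N; rewrite /pfind; case: excluded_middle_informative. Qed.
Lemma pfind_ext (T : Type) (P Q : pred T) : P =1 Q -> pfind P =1 pfind Q.
Proof. by move=> h; have -> : P = Q by apply: functional_extensionality. Qed.

Definition gen_eqMixin (T : Type) := hasDecEq.Build T (@peqP T).
Definition gen_choiceMixin (T : Type) :=
  hasChoice.Build T (@pfind_correct T) (@pfind_complete T) (@pfind_ext T).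

Lemma sig_ext (A : Type) (P : A -> Prop) (x y : {a | P a}) :
  proj1_sig x = proj1_sig y -> x = y.
Proof. case: x => a pa; case: y => b pb /= e; subst b; f_equal; apply: proof_irrelevance. Qed.

Definition frac (x : rat) : rat := x - (Num.floor x)%:~R.

Lemma fracDz x (m : int) : frac (x + m%:~R) = frac x.
Proof.
rewrite /frac floorDrz ?intr_int // intrKfloor rmorphD /=.
by rewrite opprD addrACA subrr addr0.
Qed.

Lemma frac_idem x : frac (frac x) = frac x.
Proof. by rewrite {2}/frac -rmorphN fracDz. Qed.

Lemma frac_addl x y : frac (frac x + y) = frac (x + y).
Proof. by rewrite {2}/frac addrAC -rmorphN fracDz. Qed.
Lemma frac_addr x y : frac (x + frac y) = frac (x + y).
Proof. by rewrite addrC frac_addl addrC. Qed.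
Lemma frac_opp x : frac (- frac x) = frac (- x).
Proof. by rewrite {2}/frac opprB addrC fracDz. Qed.

Definition QZ := {q : rat | frac q == q}.
HB.instance Definition _ := [isSub for (fun x : QZ => proj1_sig x)].
HB.instance Definition _ := [Choice of QZ by <:].

Definition qpi (q : rat) : QZ := exist _ (frac q) (introT eqP (frac_idem q)).
Lemma qpi_val (a : QZ) : qpi (val a) = a.
Proof. by apply: val_inj => /=; apply/eqP; case: a. Qed.
Lemma val_qpi q : val (qpi q) = frac q. Proof. by []. Qed.

Definition qadd (a b : QZ) := qpi (val a + val b).
Definition qopp (a : QZ) := qpi (- val a).
Definition qzero := qpi 0.

Lemma qpiD x y : qadd (qpi x) (qpi y) = qpi (x + y).
Proof. by apply: val_inj; rewrite /= frac_addl frac_addr. Qed.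
Lemma qpiN x : qopp (qpi x) = qpi (- x).
Proof. by apply: val_inj; rewrite /= frac_opp. Qed.
Lemma qpi_eq x y : x - y \is a Num.int -> qpi x = qpi y.
Proof.
move=> /intrP [m e]; apply: val_inj => /=.
by rewrite -(fracDz y m) -e addrC subrK.
Qed.

Lemma qaddA : associative qadd.
Proof.
move=> a b c; rewrite -(qpi_val a) -(qpi_val b) -(qpi_val c) !qpiD; by rewrite addrA.
Qed.
Lemma qaddC : commutative qadd.
Proof. by move=> a b; rewrite -(qpi_val a) -(qpi_val b) !qpiD addrC. Qed.
Lemma qadd0 : left_id qzero qadd.
Proof. by move=> a; rewrite -(qpi_val a) /qzero qpiD add0r. Qed.
Lemma qaddN : left_inverse qzero qopp qadd.
Proof. by move=> a; rewrite -(qpi_val a) qpiN qpiD addNr. Qed.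

HB.instance Definition _ := GRing.isZmodule.Build QZ qaddA qaddC qadd0 qaddN.

Lemma qpiD' x y : qpi (x + y) = qpi x + qpi y. Proof. by rewrite -qpiD. Qed.
Lemma qpi0 : qpi 0 = 0. Proof. by []. Qed.
Lemma qpiN' x : qpi (- x) = - qpi x. Proof. by rewrite -qpiN. Qed.

Lemma qpiMz x (n : int) : qpi (x *~ n) = qpi x *~ n.
Proof.
have hn : forall m : nat, qpi (x *+ m) = qpi x *+ m.
  elim=> [|m IH]; first by rewrite !mulr0n.
  by rewrite !mulrS qpiD' IH.
case: n => m; first exact: hn.
by rewrite !NegzE !mulrNz qpiN' hn.
Qed.

Lemma qpi1 : qpi 1 = 0.
Proof. by rewrite -qpi0; apply: qpi_eq; rewrite subr0 int_num1. Qed.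

Lemma qdiv (t : QZ) (n : int) : 0 < n -> exists s : QZ, s *~ n = t.
Proof.
move=> n0; exists (qpi (val t / n%:~R)).
rewrite -qpiMz -mulrzr mulfVK ?qpi_val //.
by rewrite intr_eq0 gt_eqF.
Qed.

Lemma qinv_nz (n : int) : 1 < n -> qpi (n%:~R^-1) != 0.
Proof.
move=> n1; apply/eqP => /(congr1 val); rewrite /= /frac.
have -> : Num.floor ((n%:~R : rat)^-1) = 0.
  apply: floor_def; rewrite add0r !rmorph0 rmorph1 invr_ge0 ler0z.
  rewrite (le_trans _ (ltW n1)) //= invf_lt1 ?ltr0z ?ltr1z //.
  by rewrite (lt_trans _ n1).
rewrite rmorph0 subr0 => /eqP; rewrite invr_eq0 intr_eq0 => /eqP n0.
by move: n1; rewrite n0.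
Qed.

Lemma qinv_mul (n : int) : n != 0 -> qpi (n%:~R^-1) *~ n = 0.
Proof.
by move=> n0; rewrite -qpiMz -mulrzl mulfV ?intr_eq0 // qpi1.
Qed.

Definition zm (V : Type) : Type := V.
HB.instance Definition _ (V : zmodType) := GRing.Zmodule.on (zm V).

Section ZM.
Variable V : zmodType.
Definition zscale (k : int) (v : zm V) : zm V := (v : V) *~ k.
Lemma zscaleA a b (v : zm V) : zscale a (zscale b v) = zscale (a * b) v.
Proof. exact: mulrzA_C. Qed.
Lemma zscale1 : left_id 1 zscale. Proof. by move=> v; rewrite /zscale mulr1z. Qed.
Lemma zscaleDr : right_distributive zscale +%R. Proof. by move=> a u v; rewrite /zscale mulrzDl. Qed.
Lemma zscaleDl (v : zm V) : {morph zscale^~ v : a b / a + b}.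
Proof. by move=> a b; rewrite /zscale mulrzDr. Qed.
End ZM.
HB.instance Definition _ (V : zmodType) :=
  GRing.Zmodule_isLmodule.Build int (zm V) (@zscaleA V) (@zscale1 V) (@zscaleDr V) (@zscaleDl V).

Lemma zscaleE (V : zmodType) (k : int) (v : zm V) : k *: v = (v : V) *~ k.
Proof. by []. Qed.

Lemma ex_min_nat (Pn : nat -> Prop) : (exists n, Pn n) -> exists n, Pn n /\ forall m, Pn m -> (n <= m)%N.
Proof.
move=> [n0 Pn0]; apply: NNPP => H.
have key : forall k m, (m <= k)%N -> ~ Pn m.
  elim=> [|k IH] m hm Pm.
    apply: H; exists m; split => // m' _; by move: hm; rewrite leqn0 => /eqP ->.
  case: (leqP m k) => [h|h]; first exact: (IH m h Pm).
  apply: H; exists m; split => // m' Pm'; rewrite leqNgt; apply/negP => lt.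
  by apply: (IH m') => //; rewrite -ltnS (leq_trans lt).
exact: (key n0 n0 (leqnn _) Pn0).
Qed.

Lemma int_ideal (I : int -> Prop) : lideal I ->
  exists n : int, [/\ 0 <= n, I n & forall x, I x -> exists q, x = q * n].
Proof.
case=> I0 ID IM.
case: (classic (exists x, I x /\ x != 0)) => [[x [Ix x0]]|hn]; last first.
  exists 0; split => // y Iy; exists 0; rewrite mulr0.
  by case: (eqVneq y 0) => // yn; exfalso; apply: hn; exists y.
have [m [[m0 Im] mmin]] : exists m, ((0 < m)%N /\ I m%:Z) /\ forall m', ((0 < m')%N /\ I m'%:Z) -> (m <= m')%N.
  apply: ex_min_nat; exists `|x|%N; split; first by rewrite absz_gt0.
  case: (ltP 0 x) => h; first by rewrite gtz0_abs.
  rewrite ltz0_abs; last by rewrite lt_neqAle x0 h.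
  by rewrite -mulN1r; apply: IM.
exists m%:Z; split => // y Iy; exists (y %/ m)%Z.
have mz : (m%:Z != 0) by rewrite eqz_nat -lt0n.
have Ir : I (y %% m)%Z.
  have -> : (y %% m)%Z = y + (- (y %/ m)%Z) * m%:Z.
    by rewrite {2}(divz_eq y m%:Z) mulNr addrAC subrr add0r.
  by apply: ID => //; apply: IM.
have r0 : (y %% m)%Z = 0.
  apply: NNPP => rn.
  have rge : 0 <= (y %% m)%Z by apply: modz_ge0.
  have rlt : (y %% m)%Z < m%:Z by apply: ltz_pmod; rewrite ltz_nat.
  have hpos : (0 < `|(y %% m)%Z|)%N.
    by rewrite absz_gt0; apply/eqP.
  have hI : I (`|(y %% m)%Z|%N)%:Z by rewrite gez0_abs.
  have := mmin _ (conj hpos hI).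
  by rewrite -lez_nat gez0_abs // leNgt rlt.
by rewrite {1}(divz_eq y m%:Z) r0 addr0.
Qed.

Section Subgrp.
Variables (V W : zmodType) (P : V -> Prop).
Hypotheses (P0 : P 0) (PD : forall x y, P x -> P y -> P (x + y)) (PN : forall x, P x -> P (- x)).

Lemma subgrpMn x m : P x -> P (x *+ m).
Proof. by move=> Px; elim: m => [|m IH]; [rewrite mulr0n | rewrite mulrS; apply: PD]. Qed.
Lemma subgrpMz x k : P x -> P (x *~ k).
Proof. move=> Px; case: k => m; first exact: subgrpMn. by rewrite NegzE mulrNz; apply: PN; apply: subgrpMn. Qed.

Variable f : V -> W.
Hypothesis fD : forall x y, P x -> P y -> f (x + y) = f x + f y.
Lemma addon0 : f 0 = 0.
Proof. by apply: add_fix0; rewrite -fD // addr0. Qed.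
Lemma addonN x : P x -> f (- x) = - f x.
Proof.
move=> Px; apply/eqP; rewrite -addr_eq0 addrC -fD ?subrr ?addon0 //; exact: (PN Px).
Qed.
Lemma addonMn x m : P x -> f (x *+ m) = f x *+ m.
Proof.
move=> Px; elim: m => [|m IH]; first by rewrite !mulr0n addon0.
by rewrite !mulrS fD ?IH //; apply: subgrpMn.
Qed.
Lemma addonMz x k : P x -> f (x *~ k) = f x *~ k.
Proof.
move=> Px; case: k => m; first exact: addonMn.
by rewrite !NegzE !mulrNz addonN ?addonMn //; apply: subgrpMn.
Qed.
End Subgrp.

Lemma baerQZ : forall I, lideal I -> forall h : int -> zm QZ,
  (forall x y, I x -> I y -> h (x + y) = h x + h y) ->
  (forall k x, I x -> h (k * x) = k *: h x) ->
  (forall x, I x -> (fun _ => True) (h x)) ->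
  exists h' : int -> zm QZ, [/\ (forall x y, h' (x + y) = h' x + h' y),
     (forall k x, h' (k * x) = k *: h' x), (forall x, (fun _ => True) (h' x)) &
     (forall x, I x -> h' x = h x)].
Proof.
move=> I lI h hD hZ _.
have [n [n0 In nmin]] := int_ideal lI.
case: (eqVneq n 0) => [e0|nn0].
  exists (fun _ => 0); split => //.
  - by move=> k x /=; rewrite scaler0.
  move=> x Ix; have [q ->] := nmin x Ix; rewrite e0 mulr0.
  have := hZ 0 0; rewrite mulr0 scale0r => -> //; by subst n.
have npos : 0 < n by rewrite lt_def nn0 n0.
have [s hs] := qdiv (h n : QZ) npos.
exists (fun k => k *: (s : zm QZ)); split => //.
- by move=> x y; rewrite scalerDl.
- by move=> k x; rewrite scalerA.
move=> x Ix; have [q ->] := nmin x Ix.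
have hs' : n *: (s : zm QZ) = h n := hs.
by rewrite hZ // -scalerA hs'.
Qed.

Lemma zinj (V : zmodType) (P : V -> Prop) (f : V -> QZ) :
  P 0 -> (forall x y, P x -> P y -> P (x + y)) -> (forall x, P x -> P (- x)) ->
  (forall x y, P x -> P y -> f (x + y) = f x + f y) ->
  exists g : V -> QZ, (forall x y, g (x + y) = g x + g y) /\ (forall x, P x -> g x = f x).
Proof.
move=> P0 PD PN fD.
have sP : submodP (P : zm V -> Prop).
  split => // k x Px; rewrite zscaleE; exact: subgrpMz.
have lf : linon (P : zm V -> Prop) (f : zm V -> zm QZ).
  split; first exact: fD.
  by move=> k x Px; rewrite !zscaleE (addonMz P0 PD PN fD).
have [g [gD _ _ gP]] := baer (fun _ _ _ _ => I) baerQZ sP lf (fun _ _ => I).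
by exists g.
Qed.

Lemma chi_exists (V : zmodType) (Ks : V -> Prop) (w : V) :
  Ks 0 -> (forall x y, Ks x -> Ks y -> Ks (x + y)) -> (forall x, Ks x -> Ks (- x)) ->
  ~ Ks w ->
  exists chi : V -> QZ, [/\ (forall x y, chi (x + y) = chi x + chi y),
                           (forall x, Ks x -> chi x = 0) & chi w != 0].
Proof.
move=> K0 KD KN nKw.
pose Iw := fun k : int => Ks (w *~ k).
have lI : lideal Iw.
  split; rewrite /Iw.
  - by rewrite mulr0z.
  - by move=> a b ha hb; rewrite mulrzDr; apply: KD.
  - by move=> k x hx; rewrite -mulrzA_C; apply: subgrpMz.
have [n [n0 In nmin]] := int_ideal lI.
have n_ne1 : n != 1 by apply/eqP => e; apply: nKw; move: In; rewrite /Iw e mulr1z.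
pose s := if n == 0 then qpi (2%:~R^-1) else qpi (n%:~R^-1).
have s_nz : s != 0.
  rewrite /s; case: ifP => hn; first by apply: (@qinv_nz 2).
  apply: qinv_nz; rewrite lt_neqAle eq_sym n_ne1 /= -gtz0_ge1 lt_def n0 andbT hn.
  by [].
have sn0 : s *~ n = 0.
  rewrite /s; case: ifP => hn; first by move/eqP: hn => ->; rewrite mulr0z.
  by apply: qinv_mul; rewrite hn.
have sI : forall k, Iw k -> s *~ k = 0.
  by move=> k /nmin [q ->]; rewrite -mulrzA_C sn0 mul0rz.
pose P' := fun z => exists p : V * int, Ks p.1 /\ z = p.1 + w *~ p.2.
pose f := fun z => match excluded_middle_informative (P' z) with
  | left H => s *~ (proj1_sig (constructive_indefinite_description _ H)).2
  | right _ => 0 end.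
have f_spec : forall x k, Ks x -> f (x + w *~ k) = s *~ k.
  move=> x k Kx; rewrite /f; case: excluded_middle_informative => [H|H]; last first.
    by exfalso; apply: H; exists (x, k).
  case: (proj2_sig (constructive_indefinite_description _ H)).
  set p := proj1_sig _; case: p => x0 k0 /= Kx0 e.
  have hI : Iw (k0 - k).
    rewrite /Iw mulrzBr (rearr e); apply: KD => //; exact: KN.
  by apply/eqP; rewrite -subr_eq0 -mulrzBr sI.
have P'0 : P' 0 by exists (0, 0); rewrite /= mulr0z addr0.
have P'D : forall x y, P' x -> P' y -> P' (x + y).
  move=> x y [[x1 k1] [/= K1 ->]] [[x2 k2] [/= K2 ->]].
  by exists (x1 + x2, k1 + k2); split; [apply: KD | rewrite /= mulrzDr addrACA].
have P'N : forall x, P' x -> P' (- x).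
  move=> x [[x1 k1] [/= K1 ->]].
  by exists (- x1, - k1); split; [apply: KN | rewrite /= mulrNz opprD].
have fD : forall x y, P' x -> P' y -> f (x + y) = f x + f y.
  move=> x y [[x1 k1] [/= K1 ->]] [[x2 k2] [/= K2 ->]].
  by rewrite addrACA -mulrzDr !f_spec ?mulrzDr //; apply: KD.
have [g [gD gP]] := zinj P'0 P'D P'N fD.
exists g; split => //.
- move=> x Kx; rewrite gP; last by exists (x, 0); rewrite /= mulr0z addr0.
  by rewrite -[x]addr0 -(mulr0z w) f_spec // mulr0z.
- rewrite gP; last by exists (0, 1); rewrite /= mulr1z add0r.
  by rewrite -[w]add0r -[w in _ + w]mulr1z f_spec // mulr1z.
Qed.

Definition addf (R : pzRingType) (phi : R -> QZ) := forall a b, phi (a + b) = phi a + phi b.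
Definition CogT (R : pzRingType) (N : Type) := {F : N -> R -> QZ | forall w, addf (F w)}.
HB.instance Definition _ (R : pzRingType) (N : Type) := gen_eqMixin (CogT R N).
HB.instance Definition _ (R : pzRingType) (N : Type) := gen_choiceMixin (CogT R N).

Section CogDef.
Variables (R : pzRingType) (N : Type).
Local Notation C := (CogT R N).
Definition mkC (F : N -> R -> QZ) (h : forall w, addf (F w)) : C :=
  @exist _ (fun F : N -> R -> QZ => forall w, addf (F w)) F h.
Arguments mkC F h.
Lemma cog_eq (F G : C) : (forall w r, proj1_sig F w r = proj1_sig G w r) -> F = G.
Proof.
move=> h; apply: sig_ext; apply: functional_extensionality => w.
by apply: functional_extensionality => r; apply: h.
Qed.
Lemma addf0 : addf (fun _ : R => 0). Proof. by move=> a b; rewrite addr0. Qed.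
Definition czero : C := exist (fun F : N -> R -> QZ => forall w, addf (F w)) (fun _ _ => 0) (fun _ => addf0).
Lemma addfD (F G : C) w : addf (fun r => proj1_sig F w r + proj1_sig G w r).
Proof. by move=> a b; rewrite (proj2_sig F) (proj2_sig G) addrACA. Qed.
Definition cadd (F G : C) : C := exist (fun F : N -> R -> QZ => forall w, addf (F w)) (fun w r => proj1_sig F w r + proj1_sig G w r) (addfD F G).
Lemma addfN (F : C) w : addf (fun r => - proj1_sig F w r).
Proof. by move=> a b; rewrite (proj2_sig F) opprD. Qed.
Definition copp (F : C) : C := exist (fun F : N -> R -> QZ => forall w, addf (F w)) (fun w r => - proj1_sig F w r) (addfN F).
Lemma caddA : associative cadd. Proof. by move=> a b c; apply: cog_eq => w r /=; rewrite addrA. Qed.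
Lemma caddC : commutative cadd. Proof. by move=> a b; apply: cog_eq => w r /=; rewrite addrC. Qed.
Lemma cadd0 : left_id czero cadd. Proof. by move=> a; apply: cog_eq => w r /=; rewrite add0r. Qed.
Lemma caddN : left_inverse czero copp cadd. Proof. by move=> a; apply: cog_eq => w r /=; rewrite addNr. Qed.
End CogDef.
HB.instance Definition _ (R : pzRingType) (N : Type) :=
  GRing.isZmodule.Build (CogT R N) (@caddA R N) (@caddC R N) (@cadd0 R N) (@caddN R N).

Section CogMod.
Variables (R : pzRingType) (N : Type).
Local Notation C := (CogT R N).
Lemma addfZ (k : R) (F : C) w : addf (fun s => proj1_sig F w (k * s)).
Proof. by move=> a b; rewrite mulrDr (proj2_sig F). Qed.
Definition cscale (k : R^c) (F : C) : C := exist (fun F : N -> R -> QZ => forall w, addf (F w)) (fun w s => proj1_sig F w ((k : R) * s)) (addfZ k F).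
Lemma cscaleA a b (v : C) : cscale a (cscale b v) = cscale (a * b) v.
Proof. by apply: cog_eq => w r /=; rewrite mulrA. Qed.
Lemma cscale1 : left_id 1 cscale.
Proof. by move=> v; apply: cog_eq => w r /=; rewrite mul1r. Qed.
Lemma cscaleDr : right_distributive cscale +%R.
Proof. by move=> a u v; apply: cog_eq => w r. Qed.
Lemma cscaleDl (v : C) : {morph cscale^~ v : a b / a + b}.
Proof. by move=> a b; apply: cog_eq => w r /=; rewrite mulrDl (proj2_sig v). Qed.
End CogMod.
HB.instance Definition _ (R : pzRingType) (N : Type) :=
  GRing.Zmodule_isLmodule.Build R^c (CogT R N) (@cscaleA R N) (@cscale1 R N) (@cscaleDr R N) (@cscaleDl R N).

Section CogLemmas.
Variables (R : pzRingType) (N : Type).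
Local Notation C := (CogT R N).
Lemma cogDE (F G : C) w r : proj1_sig (F + G) w r = proj1_sig F w r + proj1_sig G w r.
Proof. by []. Qed.
Lemma cog0E w r : proj1_sig (0 : C) w r = 0. Proof. by []. Qed.
Lemma cogZE (F : C) (k : R) w s : proj1_sig (F *r k) w s = proj1_sig F w (k * s).
Proof. by []. Qed.
End CogLemmas.

Definition ideal_ext (R : pzRingType) (E : lmodType R^c) (D : E -> Prop) :=
  forall I : R -> Prop, right_ideal I -> forall h : R -> E,
    (forall x y, I x -> I y -> h (x + y) = h x + h y) ->
    (forall x r, I x -> h (x * r) = h x *r r) ->
    (forall x, I x -> D (h x)) ->
    exists h' : R -> E, [/\ (forall x y, h' (x + y) = h' x + h' y),
      (forall x r, h' (x * r) = h' x *r r), (forall x, D (h' x)) &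
      (forall x, I x -> h' x = h x)].

Lemma rideal_neg (R : pzRingType) (I : R -> Prop) x : right_ideal I -> I x -> I (- x).
Proof. by case=> _ _ IM Ix; rewrite -mulrN1; apply: IM. Qed.

Lemma cog_ext (R : pzRingType) (N : Type) : ideal_ext (fun _ : CogT R N => True).
Proof.
move=> I hI h hD hZ _.
case: (hI) => I0 ID IM.
pose mu := fun w r => proj1_sig (h r) w 1.
have H : forall w, exists g : R -> QZ, (forall x y, g (x + y) = g x + g y) /\
                                    (forall x, I x -> g x = mu w x).
  move=> w; apply: zinj => //.
  - by move=> x Ix; apply: rideal_neg.
  - by move=> x y Ix Iy; rewrite /mu hD.
pose mu' := fun w => proj1_sig (constructive_indefinite_description _ (H w)).
have mu'D : forall w x y, mu' w (x + y) = mu' w x + mu' w y.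
  by move=> w; case: (proj2_sig (constructive_indefinite_description _ (H w))).
have mu'I : forall w x, I x -> mu' w x = mu w x.
  by move=> w; case: (proj2_sig (constructive_indefinite_description _ (H w))).
have adf : forall r w, addf (fun s => mu' w (r * s)).
  by move=> r w a b; rewrite mulrDr mu'D.
pose h' := fun r => exist (fun F : N -> R -> QZ => forall w, addf (F w)) (fun w s => mu' w (r * s)) (adf r) : CogT R N.
exists h'; split => //.
- by move=> x y; apply: cog_eq => w s /=; rewrite mulrDl mu'D.
- by move=> x r; apply: cog_eq => w s /=; rewrite mulrA.
- move=> x Ix; apply: cog_eq => w s /=.
  rewrite mu'I; last by apply: IM.
  by rewrite /mu hZ // cogZE mulr1.
Qed.

Definition pinv (X Y : Type) (x0 : X) (i : X -> Y) (y : Y) : X :=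
  match excluded_middle_informative (exists x, i x = y) with
  | left H => proj1_sig (constructive_indefinite_description _ H)
  | right _ => x0 end.
Lemma pinvK (X Y : Type) (x0 : X) (i : X -> Y) x : injective i -> pinv x0 i (i x) = x.
Proof.
move=> ii; rewrite /pinv; case: excluded_middle_informative => [H|H]; last first.
  by exfalso; apply: H; exists x.
by apply: ii; exact: (proj2_sig (constructive_indefinite_description _ H)).
Qed.

Lemma hom0 (R : pzRingType) (X Y : lmodType R^c) (i : X -> Y) : is_hom i -> i 0 = 0.
Proof. by case=> iD _; apply: add_fix0; rewrite -iD addr0. Qed.

Lemma inj_from_ext (R : pzRingType) (E : lmodType R^c) (D : E -> Prop) :
  (forall a b, D a -> D b -> D (a + b)) -> ideal_ext D -> injective_sub D.
Proof.
move=> Dadd ext X Y i f hi ii hf fD.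
have bD : forall I : R^c -> Prop, lideal I -> forall h : R^c -> E,
  (forall x y, I x -> I y -> h (x + y) = h x + h y) ->
  (forall k x, I x -> h (k * x) = k *: h x) ->
  (forall x, I x -> D (h x)) ->
  exists h' : R^c -> E, [/\ (forall x y, h' (x + y) = h' x + h' y),
     (forall k x, h' (k * x) = k *: h' x), (forall x, D (h' x)) &
     (forall x, I x -> h' x = h x)].
  move=> I [I0 ID IM] h hD hZ hDv.
  have rI : right_ideal (I : R -> Prop) by split => // x r Ix; exact: (IM r x Ix).
  have [h' [h'D h'Z h'Dv h'I]] := ext I rI h hD (fun x r Ix => hZ r x Ix) hDv.
  by exists h'; split => // k x; exact: (h'Z x k).
case: hi => iD iZ; case: hf => fD' fZ.
pose P := fun y : Y => exists x, y = i x.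
pose f' := fun y => f (pinv 0 i y).
have sP : submodP P.
  split.
  - by exists 0; rewrite hom0.
  - by move=> a b [x1 ->] [x2 ->]; exists (x1 + x2); rewrite iD.
  - by move=> k a [x1 ->]; exists (x1 *r k); rewrite iZ.
have lf : linon P f'.
  split.
  - by move=> a b [x1 ->] [x2 ->]; rewrite /f' -iD !pinvK // fD'.
  - by move=> k a [x1 ->]; rewrite /f' -[k *: i x1]/(i x1 *r k) -iZ !pinvK // fZ.
have Df' : forall y, P y -> D (f' y) by move=> y [x ->]; rewrite /f' pinvK.
have [g [gD gZ gDv gP]] := baer Dadd bD sP lf Df'.
exists g; split => //.
- by split => // x r; exact: (gZ r x).
- by move=> x; rewrite gP /f' ?pinvK //; exists x.
Qed.

Lemma cog_inj (R : pzRingType) (N : Type) : injective_sub (fun _ : CogT R N => True).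
Proof. by apply: inj_from_ext => //; exact: cog_ext. Qed.

Lemma ractN1 (R : pzRingType) (V : lmodType R^c) (x : V) : x *r (-1) = - x.
Proof. by rewrite /ract scaleN1r. Qed.

Lemma cog_map (R : pzRingType) (N : lmodType R^c) (Ks : N -> Prop) :
  is_submodule Ks -> exists phi : N -> CogT R N, is_hom phi /\ forall v, (phi v = 0 <-> Ks v).
Proof.
case=> K0 KD KZ.
have KN : forall x, Ks x -> Ks (- x) by move=> x Kx; rewrite -ractN1; apply: KZ.
have chi_ex : forall w, exists chi : N -> QZ, [/\ (forall x y, chi (x + y) = chi x + chi y),
     (forall x, Ks x -> chi x = 0) & (~ Ks w -> chi w != 0)].
  move=> w; case: (classic (Ks w)) => Kw.
  - by exists (fun _ => 0); split => // x y; rewrite addr0.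
  - have [chi [c1 c2 c3]] := chi_exists K0 KD KN Kw.
    by exists chi; split.
pose chi := fun w => proj1_sig (constructive_indefinite_description _ (chi_ex w)).
have chiD : forall w x y, chi w (x + y) = chi w x + chi w y.
  by move=> w; case: (proj2_sig (constructive_indefinite_description _ (chi_ex w))).
have chiK : forall w x, Ks x -> chi w x = 0.
  by move=> w; case: (proj2_sig (constructive_indefinite_description _ (chi_ex w))).
have chiW : forall w, ~ Ks w -> chi w w != 0.
  by move=> w; case: (proj2_sig (constructive_indefinite_description _ (chi_ex w))).
have adf : forall v w, addf (fun s : R => chi w (v *r s)).
  by move=> v w a b; rewrite /ract scalerDl chiD.
pose phi := fun v => exist (fun F : N -> R -> QZ => forall w, addf (F w)) (fun w s => chi w (v *r s)) (adf v) : CogT R N.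
exists phi; split.
- split.
  + by move=> x y; apply: cog_eq => w s /=; rewrite /ract scalerDr chiD.
  + move=> x r; apply: cog_eq => w s /=.
    by rewrite /ract scalerA.
- move=> v; split => [e|Kv].
  + apply: NNPP => nK; move/eqP: (chiW v nK); apply.
    have := congr1 (fun F : CogT R N => proj1_sig F v 1) e; rewrite /=.
    by rewrite /ract scale1r.
  + by apply: cog_eq => w s /=; rewrite chiK //; apply: KZ.
Qed.

Definition SubT (R : pzRingType) (I : R -> Prop) (hI : right_ideal I) := {x : R | I x}.
HB.instance Definition _ (R : pzRingType) (I : R -> Prop) (hI : right_ideal I) := gen_eqMixin (SubT hI).
HB.instance Definition _ (R : pzRingType) (I : R -> Prop) (hI : right_ideal I) := gen_choiceMixin (SubT hI).

Section SubDef.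
Variables (R : pzRingType) (I : R -> Prop) (hI : right_ideal I).
Local Notation S := (SubT hI).
Definition mkS (x : R) (h : I x) : S := @exist R I x h.
Lemma sI0 : I 0. Proof. by case: hI. Qed.
Lemma sID x y : I x -> I y -> I (x + y). Proof. by case: hI => _ h _; apply: h. Qed.
Lemma sIM x r : I x -> I (x * r). Proof. by case: hI => _ _ h; apply: h. Qed.
Definition szero : S := mkS sI0.
Definition sadd (a b : S) : S := mkS (sID (proj2_sig a) (proj2_sig b)).
Definition sopp (a : S) : S := mkS (rideal_neg hI (proj2_sig a)).
Lemma saddA : associative sadd. Proof. by move=> a b c; apply: sig_ext => /=; rewrite addrA. Qed.
Lemma saddC : commutative sadd. Proof. by move=> a b; apply: sig_ext => /=; rewrite addrC. Qed.
Lemma sadd0 : left_id szero sadd. Proof. by move=> a; apply: sig_ext => /=; rewrite add0r. Qed.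
Lemma saddN : left_inverse szero sopp sadd. Proof. by move=> a; apply: sig_ext => /=; rewrite addNr. Qed.
End SubDef.
HB.instance Definition _ (R : pzRingType) (I : R -> Prop) (hI : right_ideal I) :=
  GRing.isZmodule.Build (SubT hI) (@saddA R I hI) (@saddC R I hI) (@sadd0 R I hI) (@saddN R I hI).

Section SubMod.
Variables (R : pzRingType) (I : R -> Prop) (hI : right_ideal I).
Local Notation S := (SubT hI).
Definition sscale (k : R^c) (a : S) : S := mkS hI (sIM hI (k : R) (proj2_sig a)).
Lemma sscaleA a b (v : S) : sscale a (sscale b v) = sscale (a * b) v.
Proof. by apply: sig_ext => /=; rewrite mulrA. Qed.
Lemma sscale1 : left_id 1 sscale.
Proof. by move=> v; apply: sig_ext => /=; rewrite mulr1. Qed.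
Lemma sscaleDr : right_distributive sscale +%R.
Proof. by move=> a u v; apply: sig_ext => /=; rewrite mulrDl. Qed.
Lemma sscaleDl (v : S) : {morph sscale^~ v : a b / a + b}.
Proof. by move=> a b; apply: sig_ext => /=; rewrite mulrDr. Qed.
End SubMod.
HB.instance Definition _ (R : pzRingType) (I : R -> Prop) (hI : right_ideal I) :=
  GRing.Zmodule_isLmodule.Build R^c (SubT hI) (@sscaleA R I hI) (@sscale1 R I hI) (@sscaleDr R I hI) (@sscaleDl R I hI).

Lemma inj_to_ext (R : pzRingType) (E : lmodType R^c) (D : E -> Prop) :
  injective_sub D -> ideal_ext D.
Proof.
move=> inj I hI h hD hZ hDv.
pose i := fun x : SubT hI => (proj1_sig x : R^c^o).
have hi : is_hom i by split.
have ii : injective i by move=> a b; apply: sig_ext.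
pose f := fun x : SubT hI => h (proj1_sig x).
have hf : is_hom f.
  split.
  - by move=> a b; rewrite /f hD //; [exact: (proj2_sig a) | exact: (proj2_sig b)].
  - by move=> a r; rewrite /f -hZ //; exact: (proj2_sig a).
have [g [[gD gZ] gDv gi]] := inj _ _ i f hi ii hf (fun x => hDv _ (proj2_sig x)).
exists g; split => //.
by move=> x Ix; exact: (gi (mkS hI Ix)).
Qed.

Definition ext_for (R : pzRingType) (E : lmodType R^c) (C : R -> Prop) (D : E -> Prop) :=
  forall h : R -> E,
    (forall x y, C x -> C y -> h (x + y) = h x + h y) ->
    (forall x r, C x -> h (x * r) = h x *r r) ->
    (forall x, C x -> D (h x)) ->
    exists h' : R -> E, [/\ (forall x y, h' (x + y) = h' x + h' y),
      (forall x r, h' (x * r) = h' x *r r), (forall x, D (h' x)) &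
      (forall x, C x -> h' x = h x)].

Lemma hom_sub (R : pzRingType) (X Y : lmodType R^c) (i : X -> Y) a b : is_hom i -> i (a - b) = i a - i b.
Proof. by case=> iD _; apply/eqP; rewrite eq_sym subr_eq -iD subrK. Qed.

Lemma pair_ext (U V : zmodType) (p q : U * V) : p.1 = q.1 -> p.2 = q.2 -> p = q.
Proof. by case: p q => a b [c d] /= -> ->. Qed.

Lemma trick (R : pzRingType) (C : R -> Prop) : right_ideal C ->
  (forall (E : lmodType R^c) (A B : E -> Prop), is_submodule A -> is_submodule B ->
     ideal_ext A -> ideal_ext B -> ext_for C (fun x => A x /\ B x)) ->
  exists e, C e /\ forall x, C x -> x = e * x.
Proof.
move=> hC Hyp.
case: (hC) => C0 CD CM.
pose N0 := (R^c^o : lmodType R^c).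
have sub0 : is_submodule (fun v : N0 => v = 0).
  by split => // [x y -> ->|x r ->]; [rewrite addr0 | rewrite /ract scaler0].
have [phi1 [hphi1 ker1]] := cog_map sub0.
have inj1 : forall a b, phi1 a = phi1 b -> a = b.
  move=> a b e; apply/eqP; rewrite -subr_eq0; apply/eqP; apply/ker1.
  by rewrite hom_sub // e subrr.
case: (hphi1) => p1D p1Z.
pose Q1 := CogT R N0.
pose K2 := fun q : Q1 => exists c, C c /\ q = phi1 c.
have sK2 : is_submodule K2.
  split.
  - by exists 0; rewrite hom0.
  - by move=> a b [c1 [C1 ->]] [c2 [C2 ->]]; exists (c1 + c2); rewrite p1D; split => //; apply: CD.
  - by move=> a r [c1 [C1 ->]]; exists (c1 * r); split; [apply: CM | exact (esym (p1Z c1 r))].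
have [phi2 [hphi2 ker2]] := cog_map sK2.
case: (hphi2) => p2D p2Z.
pose E := (Q1 * CogT R Q1)%type.
pose A := fun p : E => p.2 = 0.
pose B := fun p : E => p.2 = phi2 p.1.
have sA : is_submodule A.
  split; rewrite /A /=.
  - by [].
  - by move=> x y -> ->; rewrite addr0.
  - by move=> x r ->; rewrite /ract scaler0.
have sB : is_submodule B.
  split; rewrite /B /=.
  - by rewrite hom0.
  - by move=> x y -> ->; rewrite p2D.
  - by move=> x r ->; rewrite p2Z.
have eA : ideal_ext A.
  move=> J hI h hD hZ hDv.
  have [h1 [h1D h1Z _ h1I]] := @cog_ext R N0 J hI (fun r => (h r).1)
    (fun x y Ix Iy => congr1 fst (hD x y Ix Iy)) (fun x r Ix => congr1 fst (hZ x r Ix)) (fun _ _ => I).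
  exists (fun r => (h1 r, 0)); split => //.
  - by move=> x y; apply: pair_ext => /=; rewrite ?h1D ?addr0.
  - by move=> x r; apply: pair_ext => /=; rewrite ?h1Z // /ract scaler0.
  - by move=> x Ix; apply: pair_ext => /=; rewrite ?h1I // hDv.
have eB : ideal_ext B.
  move=> J hI h hD hZ hDv.
  have [h1 [h1D h1Z _ h1I]] := @cog_ext R N0 J hI (fun r => (h r).1)
    (fun x y Ix Iy => congr1 fst (hD x y Ix Iy)) (fun x r Ix => congr1 fst (hZ x r Ix)) (fun _ _ => I).
  exists (fun r => (h1 r, phi2 (h1 r))); split => //.
  - by move=> x y; apply: pair_ext => /=; rewrite ?h1D ?p2D.
  - by move=> x r; apply: pair_ext => /=; rewrite ?h1Z ?p2Z.
  - by move=> x Ix; apply: pair_ext => /=; rewrite ?h1I // hDv.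
pose f := fun r : R => ((phi1 r, 0) : E).
have fD : forall x y, C x -> C y -> f (x + y) = f x + f y.
  by move=> x y _ _; apply: pair_ext => /=; rewrite ?p1D ?addr0.
have fZ : forall x r, C x -> f (x * r) = f x *r r.
  by move=> x r _; apply: pair_ext => /=; [exact (p1Z x r) | rewrite /ract scaler0].
have fAB : forall x, C x -> A (f x) /\ B (f x).
  move=> x Cx; split => //; rewrite /B /=; apply/esym/ker2; by exists x.
have [g [gD gZ gAB gC]] := Hyp E A B sA sB eA eB f fD fZ fAB.
case: (gAB 1) => /= A1 B1.
have : K2 (g 1).1 by apply/ker2; rewrite -B1.
case=> e [Ce e1].
exists e; split => // x Cx.
have := gZ 1 x; rewrite mul1r gC // => /(congr1 fst) /=.
move=> hx; apply: inj1; rewrite hx e1; exact (esym (p1Z e x)).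
Qed.

Lemma summand_ext (R : pzRingType) : every_right_ideal_summand R ->
  forall (E : lmodType R^c) (D : E -> Prop), ideal_ext D.
Proof.
move=> hS E D I hI h hD hZ hDv.
have [J [hJ IJ dec]] := hS I hI.
case: (hI) => I0 ID IM; case: (hJ) => J0 JD JM.
have dec' : forall x, exists a, I a /\ exists b, J b /\ x = a + b.
  by move=> x; have [a [b [Ia Jb e]]] := dec x; exists a; split => //; exists b.
pose pa := fun x => proj1_sig (constructive_indefinite_description _ (dec' x)).
have paS : forall x, I (pa x) /\ exists b, J b /\ x = pa x + b.
  by move=> x; exact: (proj2_sig (constructive_indefinite_description _ (dec' x))).
have uniq : forall x a b, I a -> J b -> x = a + b -> pa x = a.
  move=> x a b Ia Jb e; have [Ip [b' [Jb' e']]] := paS x.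
  have e2 : pa x - a = b - b'.
    have e3 : pa x + b' = a + b by rewrite -e' -e.
    exact: (esym (rearr e3)).
  apply/eqP; rewrite -subr_eq0; apply/eqP; apply: IJ.
  - by apply: ID => //; apply: rideal_neg.
  - by rewrite e2; apply: JD => //; apply: rideal_neg.
exists (fun x => h (pa x)); split.
- move=> x y; have [Ix [bx [Jx ex]]] := paS x; have [Iy [by' [Jy ey]]] := paS y.
  rewrite (uniq (x + y) (pa x + pa y) (bx + by')) ?hD //; first exact: ID.
  - exact: JD.
  - by rewrite {1}ex {1}ey addrACA.
- move=> x r; have [Ix [bx [Jx ex]]] := paS x.
  rewrite (uniq (x * r) (pa x * r) (bx * r)) ?hZ //; first exact: IM.
  - exact: JM.
  - by rewrite {1}ex mulrDl.
- by move=> x; apply: hDv; case: (paS x).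
- by move=> x Ix; rewrite (uniq x x 0) // addr0.
Qed.

Definition Pid (R : pzRingType) := forall C : R -> Prop, right_ideal C -> countably_generated C ->
  exists e, C e /\ forall x, C x -> x = e * x.

Section PidAll.
Variable R : pzRingType.
Variable I : R -> Prop.
Hypothesis hI : right_ideal I.

Definition span (s : seq R) (x : R) := exists rs : nat -> R, x = \sum_(i < size s) s`_i * rs i.
Definition pick (s : seq R) : R :=
  match excluded_middle_informative (exists x, I x /\ ~ span s x) with
  | left H => proj1_sig (constructive_indefinite_description _ H)
  | right _ => 0 end.
Fixpoint sq (n : nat) : seq R := match n with 0 => [::] | m.+1 => rcons (sq m) (pick (sq m)) end.
Definition gg (n : nat) : R := nth 0 (sq n.+1) n.

Lemma size_sq n : size (sq n) = n.
Proof. by elim: n => //= n IH; rewrite size_rcons IH. Qed.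

Lemma sqS n : sq n.+1 = rcons (sq n) (pick (sq n)). Proof. by []. Qed.

Lemma nth_sq_aux k i : nth 0 (sq (i.+1 + k)) i = gg i.
Proof.
elim: k => [|k IH]; first by rewrite addn0.
by rewrite addnS sqS nth_rcons size_sq (ltn_addr k (ltnSn i)) IH.
Qed.
Lemma nth_sq n i : (i < n)%N -> nth 0 (sq n) i = gg i.
Proof. by move=> lt; rewrite -(subnKC lt) nth_sq_aux. Qed.

Lemma gg_pick n : gg n = pick (sq n).
Proof. by rewrite /gg sqS nth_rcons size_sq ltnn eqxx. Qed.

Lemma ggI n : I (gg n).
Proof.
rewrite gg_pick /pick; case: excluded_middle_informative => [H|_]; last by case: hI.
by case: (proj2_sig (constructive_indefinite_description _ H)).
Qed.

Definition spanN n x := exists rs : nat -> R, x = \sum_(i < n) gg i * rs i.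
Lemma span_sq n x : span (sq n) x <-> spanN n x.
Proof.
rewrite /span /spanN size_sq; split => [[rs ->]|[rs ->]]; exists rs;
  by apply: eq_bigr => i _; rewrite nth_sq.
Qed.

Lemma pad n N (rs : nat -> R) : (n <= N)%N ->
  \sum_(i < n) gg i * rs i = \sum_(i < N) gg i * (if (i < n)%N then rs i else 0).
Proof.
move=> le; rewrite (big_ord_widen N (fun i => gg i * rs i) le) big_mkcond.
by apply: eq_bigr => i _; case: ifP; rewrite ?mulr0.
Qed.

Definition Cg x := exists n (rs : nat -> R), x = \sum_(i < n) gg i * rs i.

Lemma Cg_ideal : right_ideal Cg.
Proof.
split.
- by exists 0%N, (fun _ => 0); rewrite big_ord0.
- move=> x y [n [rs ->]] [m [ts ->]].
  exists (maxn n m), (fun i => (if (i < n)%N then rs i else 0) + (if (i < m)%N then ts i else 0)).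
  rewrite (pad rs (leq_maxl n m)) (pad ts (leq_maxr n m)) -big_split /=.
  by apply: eq_bigr => i _; rewrite mulrDr.
- move=> x r [n [rs ->]]; exists n, (fun i => rs i * r).
  by rewrite mulr_suml; apply: eq_bigr => i _; rewrite mulrA.
Qed.

Lemma Cg_sub x : Cg x -> I x.
Proof.
case: hI => I0 ID IM [n [rs ->]].
by apply: (big_ind I) => // i _; apply: IM; apply: ggI.
Qed.

Lemma gg_Cg N : Cg (gg N).
Proof.
exists N.+1, (fun i => if i == N then 1 else 0).
rewrite big_ord_recr /= eqxx mulr1 big1 ?add0r // => i _.
by rewrite (ltn_eqF (ltn_ord i)) mulr0.
Qed.

Hypothesis pid : Pid R.

Lemma pid_all : exists e, I e /\ forall x, I x -> x = e * x.
Proof.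
have cgC : countably_generated Cg by exists gg.
have [e [Ce eC]] := pid Cg_ideal cgC.
case: (Ce) => N [rs ers].
have sub : forall x, I x -> spanN N x.
  move=> x Ix; apply: NNPP => nsp.
  have H : exists x, I x /\ ~ span (sq N) x.
    by exists x; split => // /span_sq.
  have : ~ span (sq N) (gg N).
    rewrite gg_pick /pick; case: excluded_middle_informative => [H'|H'] //.
    by case: (proj2_sig (constructive_indefinite_description _ H')).
  apply; apply/span_sq.
  exists (fun i => rs i * gg N).
  rewrite {1}(eC _ (gg_Cg N)) ers mulr_suml; apply: eq_bigr => i _; by rewrite mulrA.
have IC : forall x, I x -> Cg x by move=> x /sub [ts ->]; exists N, ts.
exists e; split; first exact: Cg_sub.
by move=> x Ix; apply: eC; apply: IC.
Qed.
End PidAll.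

Section PidSS.
Variable R : pzRingType.
Hypothesis pid : Pid R.

Lemma idem (I : R -> Prop) : right_ideal I -> exists e, [/\ I e, e * e = e & forall x, I x -> x = e * x].
Proof.
move=> hI; have [e [Ie eI]] := @pid_all R I hI pid.
by exists e; split => //; rewrite -eI.
Qed.

Lemma pid_summand : every_right_ideal_summand R.
Proof.
move=> I hI; have [e [Ie ee eI]] := idem hI.
case: (hI) => I0 ID IM.
exists (fun x => e * x = 0); split.
- split; first by rewrite mulr0.
  + by move=> x y hx hy; rewrite mulrDr hx hy addr0.
  + by move=> x r hx; rewrite mulrA hx mul0r.
- by move=> x Ix hx; rewrite (eI x Ix).
- move=> x; exists (e * x), (x - e * x); split.
  + exact: IM.
  + by rewrite mulrBr mulrA ee subrr.
  + by rewrite addrC subrK.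
Qed.

Lemma pid_artinian : right_artinian R.
Proof.
move=> I hI hdec.
have E : forall n, exists e, [/\ I n e, e * e = e & forall x, I n x -> x = e * x].
  by move=> n; apply: idem.
pose e := fun n => proj1_sig (constructive_indefinite_description _ (E n)).
have eS : forall n, [/\ I n (e n), e n * e n = e n & forall x, I n x -> x = e n * x].
  by move=> n; exact: (proj2_sig (constructive_indefinite_description _ (E n))).
pose J := fix J n := match n with
  | 0 => fun x => e 0%N * x = 0
  | m.+1 => fun x => exists b d, [/\ J m b, I m d, e m.+1 * d = 0 & x = b + d] end.
have J0E : forall x, J 0%N x = (e 0%N * x = 0) by [].
have JSE : forall m x, J m.+1 x = exists b d, [/\ J m b, I m d, e m.+1 * d = 0 & x = b + d] by [].
have inv : forall n, right_ideal (J n) /\ (forall x, I n x -> J n x -> x = 0).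
  elim=> [|m [[Jm0 JmD JmM] JmI]].
  - split.
    + split; rewrite ?J0E.
      * by rewrite mulr0.
      * by move=> x y; rewrite !J0E mulrDr => -> ->; rewrite addr0.
      * by move=> x r; rewrite !J0E mulrA => ->; rewrite mul0r.
    + by move=> x Ix Jx; case: (eS 0%N) => _ _ h; rewrite (h x Ix); exact: Jx.
  - case: (hI m) => Im0 ImD ImM.
    split.
    + split; rewrite ?JSE.
      * by exists 0, 0; split => //; rewrite ?mulr0 ?addr0.
      * move=> x y; rewrite !JSE => [[b1 [d1 [J1 I1 e1 ->]]]] [b2 [d2 [J2 I2 e2 ->]]].
        exists (b1 + b2), (d1 + d2); split.
        -- exact: JmD.
        -- exact: ImD.
        -- by rewrite mulrDr e1 e2 addr0.
        -- by rewrite addrACA.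
      * move=> x r; rewrite !JSE => [[b1 [d1 [J1 I1 e1 ->]]]].
        exists (b1 * r), (d1 * r); split.
        -- exact: JmM.
        -- exact: ImM.
        -- by rewrite mulrA e1 mul0r.
        -- by rewrite mulrDl.
    + move=> x Ix; rewrite JSE => [[b [d [Jb Id ed ex]]]].
      have Imx : I m x by apply: hdec.
      have b0 : b = 0.
        apply: JmI => //.
        have -> : b = x - d by rewrite ex addrK.
        by apply: ImD => //; apply: (rideal_neg (hI m)).
      move: ex; rewrite b0 add0r => exd.
      by case: (eS m.+1) => _ _ h; rewrite (h x Ix) exd.
have Jasc : forall n x, J n x -> J n.+1 x.
  move=> n x Jx; rewrite JSE; exists x, 0; split => //.
  - by case: (hI n).
  - by rewrite mulr0.
  - by rewrite addr0.
have Jle : forall n m x, (n <= m)%N -> J n x -> J m x.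
  move=> n m x le Jx; rewrite -(subnKC le); elim: (m - n)%N => [|k IH]; first by rewrite addn0.
  by rewrite addnS; apply: Jasc.
pose U := fun x => exists n, J n x.
have hU : right_ideal U.
  split.
  - by exists 0%N; case: (inv 0%N) => [[]].
  - move=> x y [n Jx] [m Jy]; exists (maxn n m).
    case: (inv (maxn n m)) => [[_ h _] _]; apply: h.
    + exact: (Jle n _ _ (leq_maxl n m)).
    + exact: (Jle m _ _ (leq_maxr n m)).
  - by move=> x r [n Jx]; exists n; case: (inv n) => [[_ _ h] _]; apply: h.
have [u [Uu uU]] := @pid_all R U hU pid.
case: Uu => N JNu.
have JN : forall m x, J m x -> J N x.
  move=> m x Jx; rewrite (uU x); last by exists m.
  by case: (inv N) => [[_ _ h] _]; apply: h.
have step : forall m x, (N <= m)%N -> I m x -> I m.+1 x.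
  move=> m x le Ix.
  case: (eS m.+1) => Ie ee eI.
  case: (hI m) => Im0 ImD ImM.
  have Ia : I m.+1 (e m.+1 * x) by case: (hI m.+1) => _ _ h; exact: h.
  pose d := x - e m.+1 * x.
  have Id : I m d by apply: ImD => //; apply: (rideal_neg (hI m)); apply: hdec.
  have ed : e m.+1 * d = 0 by rewrite mulrBr mulrA ee subrr.
  have Jd : J m.+1 d by rewrite JSE; exists 0, d; split => //; [case: (inv m) => [[]] | rewrite add0r].
  have d0 : d = 0.
    case: (inv m) => _ h; apply: h => //.
    exact: (Jle N m d le (JN _ _ Jd)).
  have -> : x = e m.+1 * x by apply/eqP; rewrite -subr_eq0; apply/eqP.
  exact: Ia.
exists N => m le x.
rewrite -(subnKC le); elim: (m - N)%N => [|k IH]; first by rewrite addn0.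
rewrite addnS; split => [h|h].
- by apply/IH; apply: hdec.
- by apply: step; [exact: leq_addr | apply/IH].
Qed.

Lemma pid_ss : semisimple_artinian R.
Proof. split; [exact: pid_artinian | exact: pid_summand]. Qed.
End PidSS.

Lemma sub_add (R : pzRingType) (E : lmodType R^c) (A : E -> Prop) :
  is_submodule A -> forall a b, A a -> A b -> A (a + b).
Proof. by case=> _ h _. Qed.

Theorem proposition1p1 (R : pzRingType) :
  (semisimple_artinian R <->
     (forall (E : lmodType R^c) (A B : E -> Prop),
        is_submodule A -> is_submodule B ->
        injective_sub A -> injective_sub B ->
        injective_sub (fun x => A x /\ B x)))
  /\
  (semisimple_artinian R <->
     (forall (E : lmodType R^c) (A B : E -> Prop),
        is_submodule A -> is_submodule B ->
        aleph0_injective_sub A -> aleph0_injective_sub B ->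
        aleph0_injective_sub (fun x => A x /\ B x))).
Proof.
split; split.
- move=> [_ hS] E A B sA sB _ _; apply: inj_from_ext.
  + by move=> a b [Aa Ba] [Ab Bb]; split; [apply: (sub_add sA) | apply: (sub_add sB)].
  + exact: summand_ext.
- move=> H2; apply: pid_ss => C hC _; apply: (trick hC) => E A B sA sB eA eB.
  have iA := inj_from_ext (sub_add sA) eA.
  have iB := inj_from_ext (sub_add sB) eB.
  have := inj_to_ext (H2 E A B sA sB iA iB).
  by move=> ext h hD hZ hDv; exact: ext C hC h hD hZ hDv.
- move=> [_ hS] E A B sA sB _ _ I f hI _ fD fZ fAB.
  exact: (@summand_ext R hS E (fun x => A x /\ B x) I hI f fD fZ fAB).
- move=> H3; apply: pid_ss => C hC cgC; apply: (trick hC) => E A B sA sB eA eB.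
  have aA : aleph0_injective_sub A by move=> I f hI _; exact: eA.
  have aB : aleph0_injective_sub B by move=> I f hI _; exact: eB.
  by move=> h hD hZ hDv; exact: (H3 E A B sA sB aA aB) C h hC cgC hD hZ hDv.
Qed.
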